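(* Let $G=(\hat X,\hat\Sigma,\delta,\hat x_0,\hat x_m)$ be a bi-fuzzy automaton over a crisp state set with $n$ elements, with generated language $L_G$ and marked language $L_{G,m}$. Then for every string $s\in\hat\Sigma^*$ and every event $\sigma\in\hat\Sigma$, $$L_{G,m}(s\sigma)\sqsubseteq L_G(s\sigma)\sqsubseteq L_G(s).$$
   Context: $NCFD$ is the set of normal convex type-1 fuzzy sets $\mu:[0,1]\to[0,1]$ ($\max_u\mu(u)=1$, and $\mu(u_j)\ge\min\{\mu(u_i),\mu(u_k)\}$ for $u_i\le u_j\le u_k$); $a/u_0$ denotes the fuzzy set with value $a$ at $u_0$ and $0$ elsewhere. Operations: $(\mu_1\sqcup\mu_2)(v)=\sup\{\min(\mu_1(u),\mu_2(w)):\max(u,w)=v\}$, $(\mu_1\sqcap\mu_2)(v)=\sup\{\min(\mu_1(u),\mu_2(w)):\min(u,w)=v\}$; $\mu_1\sqsubseteq\mu_2$ iff $\mu_1\sqcap\mu_2=\mu_1$. For matrices $R$ ($p\times n$) and $S$ ($n\times k$) with entries in $NCFD$, $(R\odot S)(x,z)=\bigsqcup_{y}[R(x,y)\sqcap S(y,z)]$. A bi-fuzzy automaton $G=(\hat X,\hat\Sigma,\delta,\hat x_0,\hat x_m)$ over a crisp state set $X$ with $|X|=n$ consists of: bi-fuzzy states, which are row vectors of length $n$ with entries in $NCFD$; a set $\hat\Sigma$ of events, each event $\sigma$ being an $n\times n$ matrix with entries in $NCFD$; transition function $\delta(\hat x,\sigma)=\hat x\odot\sigma$; an initial bi-fuzzy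 state $\hat x_0$ and a final bi-fuzzy state $\hat x_m$ (row vectors in $NCFD^n$). Its generated and marked languages $L_G,L_{G,m}:\hat\Sigma^*\to NCFD$ are given by $L_G(\epsilon)=L_{G,m}(\epsilon)=1/1$ and, for $s=\sigma_1\cdots\sigma_k$ with $k>0$, $L_G(s)=\hat x_0\odot\sigma_1\odot\cdots\odot\sigma_k\odot A_n^T$ and $L_{G,m}(s)=\hat x_0\odot\sigma_1\odot\cdots\odot\sigma_k\odot\hat x_m^T$, where $A_n=[1/1,\dots,1/1]$ (length $n$) and $T$ is transpose. *)

(* Defs.v *)
(* fuzzy sets are functions R -> R over R : realType,
   only their values on [0,1] matter. *)
From HB Require Import structures.
From mathcomp Require Import all_boot all_order all_algebra.
From mathcomp Require Import all_classical all_reals.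
Set Implicit Arguments. Unset Strict Implicit. Unset Printing Implicit Defensive.
Import Order.TTheory GRing.Theory Num.Theory.
Local Open Scope ring_scope.
Local Open Scope classical_set_scope.

Section Fuzzy.
Variable R : realType.

Definition fz := R -> R.

Definition in01 (u : R) : Prop := 0 <= u /\ u <= 1.

(* a/u0 : value a at u0, 0 elsewhere *)
Definition fpoint (a u0 : R) : fz := fun u => if u == u0 then a else 0.

Definition NCFD (mu : fz) : Prop :=
  [/\ (forall u, in01 u -> 0 <= mu u /\ mu u <= 1),
      (exists u, in01 u /\ mu u = 1) &
      (forall ui uj uk, in01 ui -> in01 uj -> in01 uk -> ui <= uj -> uj <= uk ->
          Num.min (mu ui) (mu uk) <= mu uj)].

(* join and meet (extension principle with max / min) *)
Definition fjoin (m1 m2 : fz) : fz := fun v =>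
  sup [set r | exists u w, [/\ in01 u, in01 w, Num.max u w = v &
                               r = Num.min (m1 u) (m2 w)]].

Definition fmeet (m1 m2 : fz) : fz := fun v =>
  sup [set r | exists u w, [/\ in01 u, in01 w, Num.min u w = v &
                               r = Num.min (m1 u) (m2 w)]].

Definition fle (m1 m2 : fz) : Prop := forall v, in01 v -> fmeet m1 m2 v = m1 v.

Definition fvec (n : nat) := 'I_n -> fz.
Definition fevent (n : nat) := 'I_n -> 'I_n -> fz.

(* (x ⊙ sigma)(z) = ⊔_y x(y) ⊓ sigma(y,z); the empty join is 1/0,
   which is the unit of ⊔ *)
Definition vmul (n : nat) (x : fvec n) (sigma : fevent n) : fvec n :=
  fun z => \big[fjoin/fpoint 1 0]_(y < n) fmeet (x y) (sigma y z).

Definition vdot (n : nat) (x y : fvec n) : fz :=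
  \big[fjoin/fpoint 1 0]_(i < n) fmeet (x i) (y i).

Definition An (n : nat) : fvec n := fun _ => fpoint 1 1.

Definition LG (n : nat) (x0 : fvec n) (s : seq (fevent n)) : fz :=
  if s is [::] then fpoint 1 1 else vdot (foldl (@vmul n) x0 s) (@An n).

Definition LGm (n : nat) (x0 xm : fvec n) (s : seq (fevent n)) : fz :=
  if s is [::] then fpoint 1 1 else vdot (foldl (@vmul n) x0 s) xm.

End Fuzzy.

Definition all_in (T : Type) (P : T -> Prop) (s : seq T) : Prop :=
  foldr (fun x acc => P x /\ acc) True s.

(* Main.v *)
Require Import Defs.
From mathcomp Require Import all_boot all_order all_algebra.
From mathcomp Require Import all_classical all_reals.
From mathcomp Require Import lra.
Set Implicit Arguments. Unset Strict Implicit. Unset Printing Implicit Defensive.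
Import Order.TTheory GRing.Theory Num.Theory.
Local Open Scope ring_scope.
Local Open Scope classical_set_scope.

Ltac noMM t := lazymatch t with
  | context [Order.min _ _] => fail
  | context [Order.max _ _] => fail
  | _ => idtac end.
Ltac mm := repeat match goal with
  | |- context [Order.min ?a ?b] => noMM a; noMM b; case: (lerP a b) => ?
  | |- context [Order.max ?a ?b] => noMM a; noMM b; case: (lerP a b) => ?
  end.

Ltac cl := repeat match goal with
  | H : ?T |- _ => match type of T with Prop => lazymatch T with
        | is_true _ => fail | _ /\ _ => fail | _ = _ => fail | _ => clear H end end
  end.
Ltac ab := repeat match goal with
  | |- context [(?p).1 ?y] => let A := fresh "A" in set A := p.1 y in *; clearbody A
  | |- context [(?p).2 ?y] => let A := fresh "A" in set A := p.2 y in *; clearbody A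
  end.
Ltac fin := repeat match goal with H : _ /\ _ |- _ => destruct H end; lra.

Section S.
Variable R : realType.

Lemma sup_attained (S : set R) T : S T -> (forall r, S r -> r <= T) -> sup S = T.
Proof.
move=> ST ub; apply/eqP; rewrite eq_le; apply/andP; split.
  by apply: ge_sup; [exists T|].
by apply: sup_upper_bound => //; split; [exists T| exists T].
Qed.

Definition pr := (fz R * fz R)%type.

Definition valid (a : pr) :=
  [/\ forall x, in01 x -> 0 <= a.1 x /\ a.1 x <= 1,
      forall x, in01 x -> 0 <= a.2 x /\ a.2 x <= 1,
      forall x y, in01 x -> in01 y -> x <= y -> a.1 x <= a.1 y,
      forall x y, in01 x -> in01 y -> x <= y -> a.2 y <= a.2 x &
      exists p, [/\ in01 p, a.1 p = 1 & a.2 p = 1]].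

Definition rep (f : fz R) (a : pr) :=
  valid a /\ forall x, in01 x -> f x = Num.min (a.1 x) (a.2 x).

Definition pjoin (a b : pr) : pr :=
  (fun x => Num.min (a.1 x) (b.1 x), fun x => Num.max (a.2 x) (b.2 x)).
Definition pmeet (a b : pr) : pr :=
  (fun x => Num.max (a.1 x) (b.1 x), fun x => Num.min (a.2 x) (b.2 x)).
Definition ple (a b : pr) := forall x, in01 x -> b.1 x <= a.1 x /\ a.2 x <= b.2 x.
Definition P10 : pr := (fun _ => 1, fun x => if 0 < x then 0 else 1).
Definition P11 : pr := (fun x => if x < 1 then 0 else 1, fun _ => 1).

Lemma valid_peakL a p x : valid a -> in01 p -> a.1 p = 1 -> in01 x -> p <= x -> a.1 x = 1.
Proof.
case=> b1 _ m1 _ _ Hp Hp1 Hx px.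
have := m1 _ _ Hp Hx px; have := b1 _ Hx; rewrite Hp1; lra.
Qed.

Lemma valid_peakR a p x : valid a -> in01 p -> a.2 p = 1 -> in01 x -> x <= p -> a.2 x = 1.
Proof.
case=> _ b2 _ m2 _ Hp Hp1 Hx px.
have := m2 _ _ Hx Hp px; have := b2 _ Hx; rewrite Hp1; lra.
Qed.

Lemma in01_max (u w : R) : in01 u -> in01 w -> in01 (Num.max u w).
Proof. rewrite /in01 => ? ?; cl; ab; mm; fin. Qed.
Lemma in01_min (u w : R) : in01 u -> in01 w -> in01 (Num.min u w).
Proof. rewrite /in01 => ? ?; cl; ab; mm; fin. Qed.


Lemma bmin (p q : R) : 0 <= p /\ p <= 1 -> 0 <= q /\ q <= 1 -> 0 <= Num.min p q /\ Num.min p q <= 1.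
Proof. move=> ? ?; mm; fin. Qed.
Lemma bmax (p q : R) : 0 <= p /\ p <= 1 -> 0 <= q /\ q <= 1 -> 0 <= Num.max p q /\ Num.max p q <= 1.
Proof. move=> ? ?; split; mm; fin. Qed.
Lemma mmin (p q p' q' : R) : p <= p' -> q <= q' -> Num.min p q <= Num.min p' q'.
Proof. move=> ? ?; mm; fin. Qed.
Lemma mmax (p q p' q' : R) : p <= p' -> q <= q' -> Num.max p q <= Num.max p' q'.
Proof. move=> ? ?; mm; fin. Qed.
Lemma min11 : Num.min (1:R) 1 = 1. Proof. by mm. Qed.
Lemma max11 : Num.max (1:R) 1 = 1. Proof. by mm. Qed.
Lemma maxq1 (q : R) : q <= 1 -> Num.max q 1 = 1. Proof. move=> ?; mm; fin. Qed.
Lemma max1q (q : R) : q <= 1 -> Num.max 1 q = 1. Proof. move=> ?; mm; fin. Qed.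
Lemma le_maxl (p q : R) : p <= Num.max p q. Proof. mm; fin. Qed.
Lemma le_maxr (p q : R) : q <= Num.max p q. Proof. mm; fin. Qed.
Lemma ge_minl (p q : R) : Num.min p q <= p. Proof. mm; fin. Qed.
Lemma ge_minr (p q : R) : Num.min p q <= q. Proof. mm; fin. Qed.
Lemma le_minP (p q r : R) : r <= p -> r <= q -> r <= Num.min p q. Proof. move=> ? ?; mm; fin. Qed.
Lemma ge_maxP (p q r : R) : p <= r -> q <= r -> Num.max p q <= r. Proof. move=> ? ?; mm; fin. Qed.
Lemma fle_ar (a1 a2 b1 b2 : R) : b1 <= a1 -> a2 <= b2 ->
  Num.min (Num.max a1 b1) (Num.min a2 b2) = Num.min a1 a2.
Proof. move=> ? ?; mm; fin. Qed.

Section Arith.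
Variables (a1 a2 b1 b2 c1 c2 : R).
Definition BB := (0 <= a1 /\ a1 <= 1) /\ (0 <= a2 /\ a2 <= 1) /\
  (0 <= b1 /\ b1 <= 1) /\ (0 <= b2 /\ b2 <= 1).
Let TJ := Num.min (Num.min a1 b1) (Num.max a2 b2).
Let TM := Num.min (Num.max a1 b1) (Num.min a2 b2).
Let le1m (p q : R) : p <= 1 -> Num.min p q <= 1.
Proof. by move=> h; apply: le_trans (ge_minl _ _) h. Qed.
Let eq1 (p : R) : p <= 1 -> 1 <= p -> p = 1.
Proof. by move=> h1 h2; apply/eqP; rewrite eq_le h1 h2. Qed.
Lemma arJA : BB -> b2 <= a2 -> b1 = 1 -> TJ = Num.min (Num.min a1 a2) (Num.min 1 1).
Proof.
rewrite /TJ => [[[_ ha1] [[_ ha2] [[_ hb1] [_ hb2]]]]] h e.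
by rewrite e (max_l h) min11 (min_l ha1) (min_l (le1m _ ha1)).
Qed.
Lemma arJB : BB -> b2 <= a2 -> b2 = 1 -> TJ = Num.min (Num.min a1 a2) (Num.min b1 b2).
Proof.
rewrite /TJ => [[[_ ha1] [[_ ha2] [[_ hb1] [_ hb2]]]]] h e.
have e2 : a2 = 1 by apply: eq1 => //; rewrite -e.
by rewrite e e2 max11 (min_l hb1) (min_l ha1) (min_l (le1m _ ha1)).
Qed.
Lemma arJC : BB -> a2 <= b2 -> a1 = 1 -> TJ = Num.min (Num.min 1 1) (Num.min b1 b2).
Proof.
rewrite /TJ => [[[_ ha1] [[_ ha2] [[_ hb1] [_ hb2]]]]] h e.
by rewrite e (max_r h) min11 (min_r hb1) (min_r (le1m _ hb1)).
Qed.
Lemma arJD : BB -> a2 <= b2 -> a2 = 1 -> TJ = Num.min (Num.min a1 a2) (Num.min b1 b2).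
Proof.
rewrite /TJ => [[[_ ha1] [[_ ha2] [[_ hb1] [_ hb2]]]]] h e.
have e2 : b2 = 1 by apply: eq1 => //; rewrite -e.
by rewrite e e2 max11 (min_l hb1) (min_l ha1) (min_l (le1m _ ha1)).
Qed.
Lemma arJU1 : c1 <= a1 -> Num.min (Num.min c1 c2) (Num.min b1 b2) <= TJ.
Proof.
rewrite /TJ => h; apply: le_minP; first apply: le_minP.
- exact: le_trans (ge_minl _ _) (le_trans (ge_minl _ _) h).
- exact: le_trans (ge_minr _ _) (ge_minl _ _).
- exact: le_trans (ge_minr _ _) (le_trans (ge_minr _ _) (le_maxr _ _)).
Qed.
Lemma arJU2 : c1 <= b1 -> Num.min (Num.min a1 a2) (Num.min c1 c2) <= TJ.
Proof.
rewrite /TJ => h; apply: le_minP; first apply: le_minP.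
- exact: le_trans (ge_minl _ _) (ge_minl _ _).
- exact: le_trans (ge_minr _ _) (le_trans (ge_minl _ _) h).
- exact: le_trans (ge_minl _ _) (le_trans (ge_minr _ _) (le_maxl _ _)).
Qed.
Lemma arMA : BB -> b1 <= a1 -> b2 = 1 -> TM = Num.min (Num.min a1 a2) (Num.min 1 1).
Proof.
rewrite /TM => [[[_ ha1] [[_ ha2] [[_ hb1] [_ hb2]]]]] h e.
by rewrite e (max_l h) min11 (min_l ha2) (min_l (le1m _ ha1)).
Qed.
Lemma arMB : BB -> b1 <= a1 -> b1 = 1 -> TM = Num.min (Num.min a1 a2) (Num.min b1 b2).
Proof.
rewrite /TM => [[[_ ha1] [[_ ha2] [[_ hb1] [_ hb2]]]]] h e.
have e2 : a1 = 1 by apply: eq1 => //; rewrite -e.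
by rewrite e e2 max11 (min_r ha2) (min_r hb2) (min_r (le1m _ ha2)).
Qed.
Lemma arMC : BB -> a1 <= b1 -> a2 = 1 -> TM = Num.min (Num.min 1 1) (Num.min b1 b2).
Proof.
rewrite /TM => [[[_ ha1] [[_ ha2] [[_ hb1] [_ hb2]]]]] h e.
by rewrite e (max_r h) min11 (min_r hb2) (min_r (le1m _ hb1)).
Qed.
Lemma arMD : BB -> a1 <= b1 -> a1 = 1 -> TM = Num.min (Num.min a1 a2) (Num.min b1 b2).
Proof.
rewrite /TM => [[[_ ha1] [[_ ha2] [[_ hb1] [_ hb2]]]]] h e.
have e2 : b1 = 1 by apply: eq1 => //; rewrite -e.
by rewrite e e2 max11 (min_r ha2) (min_r hb2) (min_r (le1m _ ha2)).
Qed.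
Lemma arMU1 : c2 <= b2 -> Num.min (Num.min a1 a2) (Num.min c1 c2) <= TM.
Proof.
rewrite /TM => h; apply: le_minP; last apply: le_minP.
- exact: le_trans (ge_minl _ _) (le_trans (ge_minl _ _) (le_maxl _ _)).
- exact: le_trans (ge_minl _ _) (ge_minr _ _).
- exact: le_trans (ge_minr _ _) (le_trans (ge_minr _ _) h).
Qed.
Lemma arMU2 : c2 <= a2 -> Num.min (Num.min c1 c2) (Num.min b1 b2) <= TM.
Proof.
rewrite /TM => h; apply: le_minP; last apply: le_minP.
- exact: le_trans (ge_minr _ _) (le_trans (ge_minl _ _) (le_maxr _ _)).
- exact: le_trans (ge_minl _ _) (le_trans (ge_minr _ _) h).
- exact: le_trans (ge_minr _ _) (ge_minr _ _).
Qed.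
End Arith.

Lemma join_val f g a b x : rep f a -> rep g b -> in01 x ->
  fjoin f g x = Num.min (Num.min (a.1 x) (b.1 x)) (Num.max (a.2 x) (b.2 x)).
Proof.
move=> [va fa] [vb gb] Hx.
have va' := va; have vb' := vb.
case: va' => a1 a2 ma1 ma2 [pa [Hpa La Ra]].
case: vb' => b1 b2 mb1 mb2 [pb [Hpb Lb Rb]].
have h1 := a1 _ Hx; have h2 := a2 _ Hx; have h3 := b1 _ Hx; have h4 := b2 _ Hx.
apply: sup_attained.
- case/orP: (le_total (b.2 x) (a.2 x)) => hR.
  + case/orP: (le_total pb x) => hp.
    * have e := valid_peakL vb Hpb Lb Hx hp.
      exists x, pb; split => //; first exact: max_l.
      by rewrite (fa _ Hx) (gb _ Hpb) Lb Rb; apply: arJA => //; repeat split.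
    * have e := valid_peakR vb Hpb Rb Hx hp.
      exists x, x; split => //; first exact: maxxx.
      by rewrite (fa _ Hx) (gb _ Hx); apply: arJB => //; repeat split.
  + case/orP: (le_total pa x) => hp.
    * have e := valid_peakL va Hpa La Hx hp.
      exists pa, x; split => //; first exact: max_r.
      by rewrite (gb _ Hx) (fa _ Hpa) La Ra; apply: arJC => //; repeat split.
    * have e := valid_peakR va Hpa Ra Hx hp.
      exists x, x; split => //; first exact: maxxx.
      by rewrite (fa _ Hx) (gb _ Hx); apply: arJD => //; repeat split.
- move=> r [u [w [Hu Hw]]]; case/orP: (le_total u w) => uw.
  + rewrite (max_r uw) => <- ->.
    rewrite (fa _ Hu) (gb _ Hw); apply: arJU1 => //; exact: ma1.
  + rewrite (max_l uw) => <- ->.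
    rewrite (fa _ Hu) (gb _ Hw); apply: arJU2 => //; exact: mb1.
Qed.

Lemma meet_val f g a b x : rep f a -> rep g b -> in01 x ->
  fmeet f g x = Num.min (Num.max (a.1 x) (b.1 x)) (Num.min (a.2 x) (b.2 x)).
Proof.
move=> [va fa] [vb gb] Hx.
have va' := va; have vb' := vb.
case: va' => a1 a2 ma1 ma2 [pa [Hpa La Ra]].
case: vb' => b1 b2 mb1 mb2 [pb [Hpb Lb Rb]].
have h1 := a1 _ Hx; have h2 := a2 _ Hx; have h3 := b1 _ Hx; have h4 := b2 _ Hx.
apply: sup_attained.
- case/orP: (le_total (b.1 x) (a.1 x)) => hR.
  + case/orP: (le_total x pb) => hp.
    * have e := valid_peakR vb Hpb Rb Hx hp.
      exists x, pb; split => //; first exact: min_l.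
      by rewrite (fa _ Hx) (gb _ Hpb) Lb Rb; apply: arMA => //; repeat split.
    * have e := valid_peakL vb Hpb Lb Hx hp.
      exists x, x; split => //; first exact: minxx.
      by rewrite (fa _ Hx) (gb _ Hx); apply: arMB => //; repeat split.
  + case/orP: (le_total x pa) => hp.
    * have e := valid_peakR va Hpa Ra Hx hp.
      exists pa, x; split => //; first exact: min_r.
      by rewrite (gb _ Hx) (fa _ Hpa) La Ra; apply: arMC => //; repeat split.
    * have e := valid_peakL va Hpa La Hx hp.
      exists x, x; split => //; first exact: minxx.
      by rewrite (fa _ Hx) (gb _ Hx); apply: arMD => //; repeat split.
- move=> r [u [w [Hu Hw]]]; case/orP: (le_total u w) => uw.
  + rewrite (min_l uw) => <- ->.
    rewrite (fa _ Hu) (gb _ Hw); apply: arMU1 => //; exact: mb2.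
  + rewrite (min_r uw) => <- ->.
    rewrite (fa _ Hu) (gb _ Hw); apply: arMU2 => //; exact: ma2.
Qed.

Lemma valid_pjoin a b : valid a -> valid b -> valid (pjoin a b).
Proof.
move=> va vb; have va' := va; have vb' := vb.
case: va' => a1 a2 ma1 ma2 [pa [Hpa La Ra]].
case: vb' => b1 b2 mb1 mb2 [pb [Hpb Lb Rb]].
split => /=.
- by move=> x Hx; apply: bmin; [apply: a1|apply: b1].
- by move=> x Hx; apply: bmax; [apply: a2|apply: b2].
- by move=> x y Hx Hy xy; apply: mmin; [apply: ma1|apply: mb1].
- by move=> x y Hx Hy xy; apply: mmax; [apply: ma2|apply: mb2].
- exists (Num.max pa pb); have Hp := in01_max Hpa Hpb.
  rewrite (valid_peakL va Hpa La Hp (le_maxl _ _)) (valid_peakL vb Hpb Lb Hp (le_maxr _ _)).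
  split => //; first exact: min11.
  case/orP: (le_total pa pb) => h.
  + rewrite (max_r h) Rb; apply: maxq1; exact: (a2 _ Hpb).2.
  + rewrite (max_l h) Ra; apply: max1q; exact: (b2 _ Hpa).2.
Qed.

Lemma valid_pmeet a b : valid a -> valid b -> valid (pmeet a b).
Proof.
move=> va vb; have va' := va; have vb' := vb.
case: va' => a1 a2 ma1 ma2 [pa [Hpa La Ra]].
case: vb' => b1 b2 mb1 mb2 [pb [Hpb Lb Rb]].
split => /=.
- by move=> x Hx; apply: bmax; [apply: a1|apply: b1].
- by move=> x Hx; apply: bmin; [apply: a2|apply: b2].
- by move=> x y Hx Hy xy; apply: mmax; [apply: ma1|apply: mb1].
- by move=> x y Hx Hy xy; apply: mmin; [apply: ma2|apply: mb2].
- exists (Num.min pa pb); have Hp := in01_min Hpa Hpb.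
  rewrite (valid_peakR va Hpa Ra Hp (ge_minl _ _)) (valid_peakR vb Hpb Rb Hp (ge_minr _ _)).
  split => //; last exact: min11.
  case/orP: (le_total pa pb) => h.
  + rewrite (min_l h) La; apply: max1q; exact: (b1 _ Hpa).2.
  + rewrite (min_r h) Lb; apply: maxq1; exact: (a1 _ Hpb).2.
Qed.

Lemma rep_join f g a b : rep f a -> rep g b -> rep (fjoin f g) (pjoin a b).
Proof.
move=> ra rb; split; first exact: valid_pjoin ra.1 rb.1.
by move=> x Hx; rewrite (join_val ra rb Hx).
Qed.

Lemma rep_meet f g a b : rep f a -> rep g b -> rep (fmeet f g) (pmeet a b).
Proof.
move=> ra rb; split; first exact: valid_pmeet ra.1 rb.1.
by move=> x Hx; rewrite (meet_val ra rb Hx).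
Qed.

Lemma rep_fle f g a b : rep f a -> rep g b -> ple a b -> fle f g.
Proof.
move=> ra rb hab x Hx; rewrite (meet_val ra rb Hx) ra.2 //.
by case: (hab x Hx) => h1 h2; apply: fle_ar.
Qed.

Lemma rep_P10 : rep (fpoint 1 0) P10.
Proof.
split.
- split => /=.
  + by move=> x _; split; lra.
  + by move=> x _; case: ifP => _; split; lra.
  + by move=> *; lra.
  + move=> x y [Hx _] _ xy; case: ifP => h1; case: ifP => h2 //; try lra;
    by move: h2; rewrite (lt_le_trans h1 xy).
  + by exists 0; split; [rewrite /in01; lra | by [] | by rewrite ltxx].
- move=> x [Hx _] /=; rewrite /fpoint.
  case: (eqVneq x 0) => [->|h]; first by rewrite ltxx min11.
  have -> : 0 < x by rewrite lt_neqAle eq_sym h Hx.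
  by apply/esym/min_r; lra.
Qed.

Lemma rep_P11 : rep (fpoint 1 1) P11.
Proof.
split.
- split => /=.
  + by move=> x _; case: ifP => _; split; lra.
  + by move=> x _; split; lra.
  + move=> x y _ [_ Hy] xy; case: ifP => h1; case: ifP => h2 //; try lra;
    by move: h1; rewrite (le_lt_trans xy h2).
  + by move=> *; lra.
  + by exists 1; split; [rewrite /in01; lra | by rewrite ltxx | by []].
- move=> x [_ Hx] /=; rewrite /fpoint.
  case: (eqVneq x 1) => [->|h]; first by rewrite ltxx min11.
  have -> : x < 1 by rewrite lt_neqAle h Hx.
  by apply/esym/min_l; lra.
Qed.

Lemma rep_NCFD mu : NCFD mu -> exists a, rep mu a.
Proof.
case=> hb [p [Hp mp]] hc.
exists (fun x => if p <= x then 1 else mu x, fun x => if x <= p then 1 else mu x).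
have hb1 x : in01 x -> mu x <= 1 by move/hb => [].
split; first split => /=.
- by move=> x Hx; case: ifP => _; [split; lra | exact: hb].
- by move=> x Hx; case: ifP => _; [split; lra | exact: hb].
- move=> x y Hx Hy xy; case: ifP => h1; case: ifP => h2.
  + exact: lexx.
  + by move: h2; rewrite (le_trans h1 xy).
  + exact: hb1.
  + have hyp : y <= p by apply: ltW; rewrite ltNge h2.
    by have := hc x y p Hx Hy Hp xy hyp; rewrite mp min_l; [by [] | exact: hb1].
- move=> x y Hx Hy xy; case: ifP => h1; case: ifP => h2.
  + exact: lexx.
  + by move: h2; rewrite (le_trans xy h1).
  + exact: hb1.
  + have hxp : p <= x by apply: ltW; rewrite ltNge h2.
    by have := hc p x y Hp Hx Hy hxp xy; rewrite mp min_r; [by [] | exact: hb1].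
- by exists p; rewrite !lexx.
- move=> x Hx /=; case: ifP => h1; case: ifP => h2.
  + have -> : x = p by apply/eqP; rewrite eq_le h1 h2.
    by rewrite mp min11.
  + by rewrite min_r //; exact: hb1.
  + by rewrite min_l //; exact: hb1.
  + have : x < p by rewrite ltNge h1.
    by move/ltW; rewrite h2.
Qed.

Lemma ple_refl a : ple a a.
Proof. by move=> x _; split. Qed.
Lemma ple_trans a b c : ple a b -> ple b c -> ple a c.
Proof.
move=> h1 h2 x Hx; case: (h1 x Hx) (h2 x Hx) => e1 e2 [e3 e4]; split; [exact: le_trans e3 e1 | exact: le_trans e2 e4].
Qed.
Lemma ple_meetl a b : ple (pmeet a b) a.
Proof. by move=> x _; split => /=; [apply: le_maxl|apply: ge_minl]. Qed.
Lemma ple_meetr a b : ple (pmeet a b) b.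
Proof. by move=> x _; split => /=; [apply: le_maxr|apply: ge_minr]. Qed.
Lemma ple_meet2 a b c : ple a b -> ple a c -> ple a (pmeet b c).
Proof.
move=> h1 h2 x Hx; case: (h1 x Hx) (h2 x Hx) => ? ? [? ?]; split => /=.
  exact: ge_maxP. exact: le_minP.
Qed.
Lemma ple_join2 a b c : ple a c -> ple b c -> ple (pjoin a b) c.
Proof.
move=> h1 h2 x Hx; case: (h1 x Hx) (h2 x Hx) => ? ? [? ?]; split => /=.
  exact: le_minP. exact: ge_maxP.
Qed.
Lemma ple_joinmono a b c d : ple a b -> ple c d -> ple (pjoin a c) (pjoin b d).
Proof.
move=> h1 h2 x Hx; case: (h1 x Hx) (h2 x Hx) => ? ? [? ?]; split => /=.
  exact: mmin. exact: mmax.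
Qed.
Lemma ple_P11 a : valid a -> ple a P11.
Proof.
move=> va; have va' := va; case: va' => a1 a2 _ _ [p [Hp Lp Rp]].
move=> x Hx /=; split; last by case: (a2 x Hx).
case: ifP => h; first by case: (a1 x Hx).
have hx : 1 <= x by rewrite leNgt h.
rewrite (valid_peakL va Hp Lp Hx) //; case: Hp => _ hp1; exact: le_trans hp1 hx.
Qed.

Lemma ple_P10 a : valid a -> ple P10 a.
Proof.
move=> va; have va' := va; case: va' => a1 a2 _ _ [p [Hp Lp Rp]].
move=> x Hx /=; split; first by case: (a1 x Hx).
case: ifP => h; first by case: (a2 x Hx).
have hx : x <= 0 by rewrite leNgt h.
rewrite (valid_peakR va Hp Rp Hx) //; case: Hp => hp0 _; exact: le_trans hx hp0.
Qed.

Lemma rep_big n (F : 'I_n -> fz R) (P : 'I_n -> pr) : (forall i, rep (F i) (P i)) ->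
  rep (\big[@fjoin R/fpoint 1 0]_(i < n) F i) (\big[pjoin/P10]_(i < n) P i).
Proof.
move=> h; apply: (big_rec2 (fun f a => rep f a)); first exact: rep_P10.
by move=> i f a _ ha; apply: rep_join.
Qed.

Lemma rep_vec n (x : fvec R n) : (forall i, exists a, rep (x i) a) ->
  exists X : 'I_n -> pr, forall i, rep (x i) (X i).
Proof. by move=> h; case: (choice h) => X HX; exists X. Qed.

Lemma rep_ev n (sg : fevent R n) : (forall i j, NCFD (sg i j)) ->
  exists S : 'I_n -> 'I_n -> pr, forall i j, rep (sg i j) (S i j).
Proof.
move=> h.
have h' : forall i, exists Si : 'I_n -> pr, forall j, rep (sg i j) (Si j).
  by move=> i; apply: rep_vec => j; apply: rep_NCFD.
by case: (choice h') => S HS; exists S.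
Qed.

Lemma rep_vmul n (x : fvec R n) (sg : fevent R n) X S :
  (forall i, rep (x i) (X i)) -> (forall i j, rep (sg i j) (S i j)) ->
  forall z, rep (vmul x sg z) (\big[pjoin/P10]_(y < n) pmeet (X y) (S y z)).
Proof. by move=> hx hs z; apply: rep_big => y; apply: rep_meet. Qed.

Lemma rep_vdot n (x y : fvec R n) X Y :
  (forall i, rep (x i) (X i)) -> (forall i, rep (y i) (Y i)) ->
  rep (vdot x y) (\big[pjoin/P10]_(i < n) pmeet (X i) (Y i)).
Proof. by move=> hx hy; apply: rep_big => i; apply: rep_meet. Qed.

Lemma rep_fold n (Sigma : set (fevent R n)) (x0 : fvec R n) s :
  (forall sg, Sigma sg -> forall i j, NCFD (sg i j)) ->
  (forall i, exists a, rep (x0 i) a) -> all_in Sigma s ->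
  forall i, exists a, rep (foldl (@vmul R n) x0 s i) a.
Proof.
move=> HS; elim: s x0 => [|sg s IH] x0 Hx //= [Hsg Hs].
apply: IH => //.
case: (rep_vec Hx) => X HX; case: (rep_ev (HS _ Hsg)) => S HSS.
move=> z; eexists; exact: rep_vmul.
Qed.
End S.

Theorem proposition2 (R : realType) (n : nat) (Sigma : set (fevent R n))
    (x0 xm : fvec R n)
    (HSigma : forall sigma, Sigma sigma -> forall i j, NCFD (sigma i j))
    (Hx0 : forall i, NCFD (x0 i)) (Hxm : forall i, NCFD (xm i))
    (s : seq (fevent R n)) (sigma : fevent R n)
    (Hs : all_in Sigma s) (Hsigma : Sigma sigma) :
  fle (LGm x0 xm (rcons s sigma)) (LG x0 (rcons s sigma)) /\
  fle (LG x0 (rcons s sigma)) (LG x0 s).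
Proof.
have Hx0' : forall i, exists a, rep (x0 i) a by move=> i; apply: rep_NCFD.
case: (rep_vec (rep_fold HSigma Hx0' Hs)) => Y HY.
case: (rep_vec (fun i => rep_NCFD (Hxm i))) => Xm HXm.
case: (rep_ev (HSigma _ Hsigma)) => S HS.
set y := foldl (@vmul R n) x0 s in HY.
have HW := rep_vmul HY HS.
set W := fun z : 'I_n => \big[@pjoin R/@P10 R]_(j < n) @pmeet R (Y j) (S j z) in HW.
have HA : forall i, rep (@An R n i) (@P11 R) by move=> i; exact: rep_P11.
have EG : LG x0 (rcons s sigma) = vdot (vmul y sigma) (@An R n).
  rewrite /LG; case E: (rcons s sigma) => [|a l]; first by case: (s) E.
  by rewrite -E foldl_rcons.
have EGm : LGm x0 xm (rcons s sigma) = vdot (vmul y sigma) xm.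
  rewrite /LGm; case E: (rcons s sigma) => [|a l]; first by case: (s) E.
  by rewrite -E foldl_rcons.
have RG := rep_vdot HW HA.
have RGm := rep_vdot HW HXm.
rewrite EG EGm; split.
  apply: (rep_fle RGm RG).
  apply: (big_rec2 (fun a b => ple a b)); first exact: ple_refl.
  move=> i a b _ hab; apply: ple_joinmono => //.
  apply: ple_meet2; first exact: ple_meetl.
  apply: ple_trans (ple_meetr _ _) _; apply: ple_P11; exact: (HXm i).1.
have key : forall D, valid D -> ple (\big[@pjoin R/@P10 R]_(i < n) Y i) D ->
    ple (\big[@pjoin R/@P10 R]_(z < n) @pmeet R (\big[@pjoin R/@P10 R]_(j < n) @pmeet R (Y j) (S j z)) (P11 R)) D.
  move=> D vD hD.
  apply: (big_rec (fun a => ple a D)); first exact: ple_P10.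
  move=> z a _ ha; apply: ple_join2 => //.
  apply: ple_trans (ple_meetl _ _) _.
  apply: ple_trans hD.
  apply: (big_rec2 (fun a b => ple a b)); first exact: ple_refl.
  by move=> i a' b' _ h; apply: ple_joinmono => //; exact: ple_meetl.
have Ey : s <> [::] -> LG x0 s = vdot y (@An R n) by rewrite /y; case: (s).
case: (eqVneq s [::]) => [Es|Ns].
  rewrite Es; apply: (rep_fle RG (rep_P11 R)).
  apply: key; first exact: (rep_P11 R).1.
  apply: (big_rec (fun a => ple a (@P11 R))); first exact: ple_P10 (rep_P11 R).1.
  move=> i a _ ha; apply: ple_join2 => //; apply: ple_P11; exact: (HY i).1.
have RGs := rep_vdot HY HA.
rewrite (Ey (elimN eqP Ns)); apply: (rep_fle RG RGs).
apply: key; first exact: RGs.1.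
apply: (big_rec2 (fun a b => ple a b)); first exact: ple_refl.
move=> i a' b' _ h; apply: ple_joinmono => //.
apply: ple_meet2; first exact: ple_refl.
apply: ple_P11; exact: (HY i).1.
Qed.
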